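(* Let $\mathcal L_n\subset\mathbb C[z_1,z_2,\theta_1,\theta_2]$ be the left ideal generated by $L_1$ and $L_2$. Then its restriction $\mathcal L_n|_{z_2=0}$ is the left ideal of $\mathbb C[z_1,\theta_1]$ generated by $$L:=\theta_1^2-a_0z_1(\theta_1+a_1)(\theta_1+a_2).$$
   Context: $\mathbb C[z_1,z_2,\theta_1,\theta_2]$ denotes the non-commutative ring with relations $\theta_iz_i=z_i(\theta_i+1)$ ($i=1,2$), all other pairs of generators commuting; $\theta_i$ is interpreted as $z_i\partial/\partial z_i$. For a left ideal $\mathcal I$ of this ring, its restriction to $z_2=0$ is $\mathcal I|_{z_2=0}=\{A\in\mathbb C[z_1,\theta_1]:\ \exists B_1,B_2\in\mathbb C[z_1,z_2,\theta_1,\theta_2],\ A+z_2B_1+\theta_2B_2\in\mathcal I\}$. Fix an integer $n\ge1$ and constants $a_0\neq0,a_1,a_2$, and $L_1=-n\theta_1\theta_2+\theta_1^2-a_0z_1(\theta_1+a_1)(\theta_1+a_2)$, $L_2=\theta_2^{n}-(-1)^n z_2\,(n\theta_2-\theta_1)(n\theta_2-\theta_1+1)\cdots(n\theta_2-\theta_1+n-1)$. *)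

(* Defs.v *)
From HB Require Import structures.
From mathcomp Require Import all_boot all_order all_algebra.
Set Implicit Arguments. Unset Strict Implicit. Unset Printing Implicit Defensive.
Import Order.TTheory GRing.Theory Num.Theory.
Local Open Scope ring_scope.

(* The ring C[z1,z2,theta1,theta2] with theta_i z_i = z_i (theta_i + 1) is
   represented by normal forms  sum_{a,b} z1^a z2^b p_{ab}(theta1,theta2)
   (z's on the left, theta's on the right).  As an additive group this is
   F[z1][z2] ⊗ F[theta1][theta2], encoded as nested polynomials:
     TP F := {poly {poly F}}   (outer variable theta1, inner theta2)
     W  F := {poly {poly TP F}} (outer variable z1, inner z2).
   Only the additive structure of these poly types is used; the
   non-commutative product is [wmul] below. *)
Definition TP (F : fieldType) := {poly {poly F}}.
Definition W (F : fieldType) := {poly {poly TP F}}.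

Section Weyl.
Variable F : fieldType.

Definition shiftT (c d : nat) (p : TP F) : TP F :=
  (map_poly (fun r : {poly F} => r \Po ('X + (d%:R)%:P)) p)
    \Po ('X + ((c%:R : {poly F}))%:P).

Definition wmono (a b : nat) (r : TP F) : W F := ('X^b * r%:P)%:P * 'X^a.

(* (z^alpha p(theta)) (z^gamma q(theta)) = z^(alpha+gamma) p(theta+gamma) q(theta) *)
Definition wmul (P Q : W F) : W F :=
  \sum_(a < size P) \sum_(b < size P`_a) \sum_(c < size Q) \sum_(d < size Q`_c)
     wmono (a + c) (b + d) (shiftT c d P`_a`_b * Q`_c`_d).

Definition wz1 : W F := 'X.
Definition wz2 : W F := ('X : {poly TP F})%:P.
Definition wth1 : W F := (('X : TP F)%:P)%:P.
Definition wth2 : W F := (((('X : {poly F})%:P) : TP F)%:P)%:P.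
Definition wcst (c : F) : W F := c%:P%:P%:P%:P.

End Weyl.

Arguments wz1 {F}. Arguments wz2 {F}. Arguments wth1 {F}. Arguments wth2 {F}.

Notation "x *w y" := (wmul x y) (at level 40, left associativity).

Definition L1 (F : fieldType) (n : nat) (a0 a1 a2 : F) : W F :=
  - (@wcst F n%:R *w wth1 *w wth2) + wth1 *w wth1
  - @wcst F a0 *w wz1 *w (wth1 + @wcst F a1) *w (wth1 + @wcst F a2).

Definition wexp (F : fieldType) (x : W F) (k : nat) : W F :=
  iter k (@wmul F x) (@wcst F 1).

Definition L2 (F : fieldType) (n : nat) : W F :=
  wexp wth2 n
  - @wcst F ((-1) ^+ n) *w wz2 *w
      \big[@wmul F/@wcst F 1]_(k < n)
         (@wcst F n%:R *w wth2 - wth1 + @wcst F (nat_of_ord k)%:R).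

Definition Lred (F : fieldType) (a0 a1 a2 : F) : W F :=
  wth1 *w wth1 - @wcst F a0 *w wz1 *w (wth1 + @wcst F a1) *w (wth1 + @wcst F a2).

(* C[z1,theta1] in normal form: {poly {poly F}} with outer variable z1 and
   inner variable theta1; [emb] is its inclusion into W. *)
Definition emb (F : fieldType) (A : {poly {poly F}}) : W F :=
  map_poly (fun p : {poly F} => ((map_poly polyC p : TP F))%:P) A.

Definition in_Ln (F : fieldType) (n : nat) (a0 a1 a2 : F) (P : W F) : Prop :=
  exists P1 P2 : W F, P = P1 *w L1 n a0 a1 a2 + P2 *w L2 F n.

Definition in_restr (F : fieldType) (n : nat) (a0 a1 a2 : F)
    (A : {poly {poly F}}) : Prop :=
  exists B1 B2 : W F, in_Ln n a0 a1 a2 (emb A + wz2 *w B1 + wth2 *w B2).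

Definition in_idealL (F : fieldType) (a0 a1 a2 : F) (A : {poly {poly F}}) : Prop :=
  exists Q : {poly {poly F}}, emb A = emb Q *w Lred a0 a1 a2.

(* Main.v *)
Require Import Defs.
From HB Require Import structures.
From mathcomp Require Import all_boot all_order all_algebra.
Import Order.TTheory GRing.Theory Num.Theory.
Local Open Scope ring_scope.

Lemma pad {V : nmodType} {n N : nat} {f : nat -> V} : (n <= N)%N ->
  (forall k, (n <= k)%N -> f k = 0) -> \sum_(k < n) f k = \sum_(k < N) f k.
Proof.
move=> hnN hf; rewrite -(big_mkord xpredT f) -(big_mkord xpredT f).
rewrite (@big_cat_nat _ _ _ n 0 N xpredT f (leq0n n) hnN) /= [X in _ = _ + X]big1_seq ?addr0 //.
by move=> k /andP[_]; rewrite mem_index_iota => /andP[hk _]; exact: hf.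
Qed.

Lemma sum_ind (V : nmodType) N (g : nat -> V) (i : nat) :
  (forall k, (N <= k)%N -> g k = 0) ->
  \sum_(a < N) (if i == a then g a else 0) = g i.
Proof.
move=> hg; case: (ltnP i N) => hi.
  rewrite (bigD1 (Ordinal hi)) //= eqxx big1 ?addr0 // => a ha.
  case: eqP => // e; move: ha; suff -> : a = Ordinal hi by rewrite eqxx.
  by apply: val_inj; rewrite /= e.
rewrite hg // big1 // => a _; case: eqP => // <-; exact: hg.
Qed.

Lemma sum_ind2 (V : nmodType) N M (f : nat -> nat -> V) (i j : nat) :
  (forall a b, (N <= a)%N || (M <= b)%N -> f a b = 0) ->
  \sum_(a < N) \sum_(b < M) (if (i == a) && (j == b) then f a b else 0) = f i j.
Proof.
move=> hf.
rewrite (eq_bigr (fun a : 'I_N => if i == a then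
   \sum_(b < M) (if j == b then f a b else 0) else 0)); last first.
  move=> a _; case: (i == a) => //=; by rewrite big1.
rewrite (@sum_ind _ N (fun a => \sum_(b < M) (if j == b then f a b else 0))).
  by rewrite sum_ind // => k hk; apply: hf; rewrite hk orbT.
move=> k hk; rewrite big1 // => b _; rewrite hf ?hk //; by case: (_ == _).
Qed.

Lemma bnd {R : nzSemiRingType} (P : {poly {poly R}}) :
  exists M, forall a, leq (size P`_a) M.
Proof.
exists (\sum_(a < size P) size (P`_a)%R)%N => a.
case: (ltnP a (size P)) => h.
  by rewrite (bigD1 (Ordinal h)) //= leq_addr.
by rewrite nth_default // size_poly0.
Qed.

Section W.
Variable F : fieldType.
Local Notation W := (W F).
Local Notation TP := (TP F).

Definition wc (r : TP) : W := r%:P%:P.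

Lemma coef_wc r i j : (wc r)`_i`_j = if (i == 0%N) && (j == 0%N) then r else 0.
Proof.
rewrite /wc coefC; case: (i == 0%N) => /=; last by rewrite coef0.
by rewrite coefC.
Qed.

Lemma coef_wmono a b r i j :
  (@wmono F a b r)`_i`_j = if (i == a) && (j == b) then r else 0.
Proof.
rewrite /wmono coefMXn; case: ltngtP => h.
- by rewrite coef0 andFb.
- by rewrite coefC subn_eq0 leqNgt h coef0.
- rewrite h subnn coefC eqxx /= coefXnM; case: ltngtP => h'.
  + by [].
  + by rewrite coefC subn_eq0 leqNgt h'.
  + by rewrite h' subnn coefC.
Qed.

Lemma wmono0 a b : @wmono F a b 0 = 0.
Proof. by rewrite /wmono polyC0 mulr0 polyC0 mul0r. Qed.

Lemma shiftT_0 c d : @shiftT F c d 0 = 0.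
Proof. by rewrite /shiftT map_poly0 comp_poly0. Qed.

Lemma wmulE (P Q : W) N M N' M' :
 (size P <= N)%N -> (forall a, leq (size P`_a) M) ->
 (size Q <= N')%N -> (forall c, leq (size Q`_c) M') ->
 P *w Q = \sum_(a < N) \sum_(b < M) \sum_(c < N') \sum_(d < M')
     wmono (a + c) (b + d) (shiftT c d P`_a`_b * Q`_c`_d).
Proof.
move=> hN hM hN' hM'; rewrite /wmul.
rewrite (@pad _ _ _ (fun a => \sum_(b < size P`_a) \sum_(c < size Q) \sum_(d < size Q`_c)
   wmono (a + c) (b + d) (shiftT c d P`_a`_b * Q`_c`_d)) hN) => [|a ha];
  last by rewrite nth_default // size_poly0 big_ord0.
apply: eq_bigr => a _.
rewrite (@pad _ _ _ (fun b => \sum_(c < size Q) \sum_(d < size Q`_c)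
   wmono (a + c) (b + d) (shiftT c d P`_a`_b * Q`_c`_d)) (hM a)) => [|b hb]; last first.
  have Pab : P`_a`_b = 0 by rewrite nth_default.
  by rewrite big1 // => c _; rewrite big1 // => d _; rewrite Pab shiftT_0 mul0r wmono0.
apply: eq_bigr => b _.
rewrite (@pad _ _ _ (fun c => \sum_(d < size Q`_c)
   wmono (a + c) (b + d) (shiftT c d P`_a`_b * Q`_c`_d)) hN') => [|c hc]; last first.
  have Qc0 : forall k : nat, Q`_c`_k = 0 by move=> k; rewrite (nth_default _ hc) coef0.
  by rewrite big1 // => d _; rewrite Qc0 mulr0 wmono0.
apply: eq_bigr => c _.
rewrite (@pad _ _ _ (fun d => 
   wmono (a + c) (b + d) (shiftT c d P`_a`_b * Q`_c`_d)) (hM' c)) => [//|d hd].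
by rewrite (nth_default _ hd) mulr0 wmono0.
Qed.

Lemma coef_wmul (P Q : W) N M N' M' i j :
 (size P <= N)%N -> (forall a, leq (size P`_a) M) ->
 (size Q <= N')%N -> (forall c, leq (size Q`_c) M') ->
 (P *w Q)`_i`_j = \sum_(a < N) \sum_(b < M) \sum_(c < N') \sum_(d < M')
     (if (i == (a + c)%N) && (j == (b + d)%N) then shiftT c d P`_a`_b * Q`_c`_d else 0).
Proof.
move=> h1 h2 h3 h4; rewrite (wmulE _ _ _ _ _ _ h1 h2 h3 h4) coef_sum coef_sum.
apply: eq_bigr => a _; rewrite coef_sum coef_sum.
apply: eq_bigr => b _; rewrite coef_sum coef_sum.
apply: eq_bigr => c _; rewrite coef_sum coef_sum.
by apply: eq_bigr => d _; rewrite coef_wmono.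
Qed.

Lemma polyWP (P Q : W) : (forall i j, P`_i`_j = Q`_i`_j) -> P = Q.
Proof. by move=> h; apply/polyP => i; apply/polyP => j; exact: h. Qed.

Definition ev0 (r : TP) : TP := map_poly (polyC \o horner_eval (0:F)) r.
Definition phi (P : W) : {poly {poly F}} :=
  map_poly (fun q : {poly TP} => map_poly (horner_eval (0:F)) q`_0) P.
Definition proj (P : W) : W := emb (phi P).

Lemma coef_emb (A : {poly {poly F}}) i j :
  (emb A)`_i`_j = if j == 0%N then (map_poly polyC A`_i : TP) else 0.
Proof. by rewrite /emb coef_map_id0 ?map_poly0 ?polyC0 // coefC. Qed.

Lemma coef_proj P i j : (proj P)`_i`_j = if j == 0%N then ev0 P`_i`_0 else 0.
Proof.
rewrite /proj coef_emb /phi coef_map_id0; last by rewrite coef0 map_poly0.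
by rewrite /ev0 map_poly_comp.
Qed.

Lemma projD P Q : proj (P + Q) = proj P + proj Q.
Proof.
apply: polyWP => i j; rewrite coef_proj !coefD !coef_proj.
by case: (j == 0%N); rewrite ?addr0 // /ev0 rmorphD.
Qed.

Lemma projN P : proj (- P) = - proj P.
Proof.
apply: polyWP => i j; rewrite coef_proj !coefN !coef_proj.
by case: (j == 0%N); rewrite ?oppr0 // /ev0 rmorphN.
Qed.

Lemma projB P Q : proj (P - Q) = proj P - proj Q.
Proof. by rewrite projD projN. Qed.

Lemma proj_emb (A : {poly {poly F}}) : proj (emb A) = emb A.
Proof.
apply: polyWP => i j; rewrite coef_proj !coef_emb eqxx.
case: (j == 0%N) => //; rewrite /ev0 -map_poly_comp.
by apply: eq_map_poly => x /=; rewrite /horner_eval hornerC.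
Qed.

Lemma proj_wc r : proj (wc r) = wc (ev0 r).
Proof.
apply: polyWP => i j; rewrite coef_proj !coef_wc eqxx andbT.
case: (j == 0%N); rewrite ?andbF ?andbT //.
by case: (i == 0%N); rewrite // /ev0 rmorph0.
Qed.

Lemma ev0_X : ev0 'X = 'X.
Proof. by rewrite /ev0 map_polyX. Qed.

Lemma ev0_C (c : F) : ev0 (c%:P%:P) = c%:P%:P.
Proof. by rewrite /ev0 map_polyC /= /horner_eval hornerC. Qed.

Lemma ev0_th2 : ev0 (('X : {poly F})%:P) = 0.
Proof. by rewrite /ev0 map_polyC /= /horner_eval hornerX polyC0. Qed.

Lemma shiftT0 c (p : TP) : shiftT c 0 p = p \Po ('X + (c%:R)%:P).
Proof.
rewrite /shiftT mulr0n polyC0 addr0.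
have -> // : map_poly (fun r : {poly F} => r \Po 'X) p = p.
by apply: map_poly_id => r _; exact: comp_polyXr.
Qed.

Lemma ev0_shift c (p q : TP) : ev0 (shiftT c 0 p * q) = shiftT c 0 (ev0 p) * ev0 q.
Proof.
by rewrite !shiftT0 /ev0 rmorphM /= map_comp_poly map_polyXaddC rmorph_nat.
Qed.

Lemma shiftT00 (r : TP) : shiftT 0 0 r = r.
Proof. by rewrite shiftT0 mulr0n polyC0 addr0 comp_polyXr. Qed.

Lemma shiftT_th2 c : @shiftT F c 0 (('X : {poly F})%:P) = ('X)%:P.
Proof. by rewrite shiftT0 comp_polyC. Qed.

Lemma wmul0 (Q : W) : (0 : W) *w Q = 0.
Proof. by rewrite /wmul size_poly0 big_ord0. Qed.

Lemma wmulr0 (P : W) : P *w 0 = 0.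
Proof.
rewrite /wmul big1 // => a _; rewrite big1 // => b _.
by rewrite size_poly0 big_ord0.
Qed.

Lemma size_wc (s : TP) : (size (wc s) <= 1)%N.
Proof. exact: size_polyC_leq1. Qed.

Lemma size_wc_c (s : TP) c : leq (size (wc s)`_c) 1.
Proof. by rewrite /wc coefC; case: (_ == _); rewrite ?size_polyC_leq1 ?size_poly0. Qed.

Lemma wmul_wc_r (P : W) s i j : (P *w wc s)`_i`_j = P`_i`_j * s.
Proof.
have [M hM] := bnd P.
rewrite (coef_wmul _ _ _ _ _ _ _ _ (leqnn (size P)) hM (size_wc s) (size_wc_c s)).
transitivity (\sum_(a < size P) \sum_(b < M)
   (if (i == a) && (j == b) then P`_a`_b * s else 0)).
  apply: eq_bigr => a _; apply: eq_bigr => b _.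
  by rewrite !big_ord1 coef_wc /= !addn0 shiftT00.
rewrite (@sum_ind2 _ _ _ (fun a b => P`_a`_b * s)) // => a b /orP[] h.
  by rewrite (nth_default _ h) coef0 mul0r.
by rewrite (nth_default _ (leq_trans (hM a) h)) mul0r.
Qed.

Lemma wmul_wc_l (P : W) r i j : (wc r *w P)`_i`_j = shiftT i j r * P`_i`_j.
Proof.
have [M hM] := bnd P.
rewrite (coef_wmul _ _ _ _ _ _ _ _ (size_wc r) (size_wc_c r) (leqnn (size P)) hM).
rewrite !big_ord1.
transitivity (\sum_(c < size P) \sum_(d < M)
   (if (i == c) && (j == d) then shiftT c d r * P`_c`_d else 0)).
  apply: eq_bigr => c _; apply: eq_bigr => d _.
  by rewrite coef_wc /= !add0n.
rewrite (@sum_ind2 _ _ _ (fun c d => shiftT c d r * P`_c`_d)) // => c d /orP[] h.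
  by rewrite (nth_default _ h) coef0 mulr0.
by rewrite (nth_default _ (leq_trans (hM c) h)) mulr0.
Qed.

Lemma wc_mul r s : wc r *w wc s = wc (r * s).
Proof.
apply: polyWP => i j; rewrite wmul_wc_r !coef_wc.
by case: (_ && _); rewrite ?mul0r.
Qed.

Lemma wmulDr (P Q1 Q2 : W) : P *w (Q1 + Q2) = P *w Q1 + P *w Q2.
Proof.
have [M hM] := bnd P; have [M1 h1] := bnd Q1; have [M2 h2] := bnd Q2.
pose N' := maxn (size Q1) (size Q2); pose M' := maxn M1 M2.
have s1 : (size Q1 <= N')%N := leq_maxl _ _.
have s2 : (size Q2 <= N')%N := leq_maxr _ _.
have t1 : forall c, leq (size Q1`_c) M' := fun c => leq_trans (h1 c) (leq_maxl _ _).
have t2 : forall c, leq (size Q2`_c) M' := fun c => leq_trans (h2 c) (leq_maxr _ _).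
have s12 : (size (Q1 + Q2)%R <= N')%N := size_polyD _ _.
have t12 : forall c, leq (size (Q1 + Q2)`_c) M'.
  by move=> c; rewrite coefD; apply: leq_trans (size_polyD _ _) _; rewrite geq_max t1 t2.
apply: polyWP => i j; rewrite coefD coefD.
rewrite (coef_wmul _ _ _ _ _ _ _ _ (leqnn (size P)) hM s12 t12).
rewrite (coef_wmul _ _ _ _ _ _ _ _ (leqnn (size P)) hM s1 t1).
rewrite (coef_wmul _ _ _ _ _ _ _ _ (leqnn (size P)) hM s2 t2).
rewrite -big_split; apply: eq_bigr => a _.
rewrite -big_split; apply: eq_bigr => b _.
rewrite -big_split; apply: eq_bigr => c _.
rewrite -big_split; apply: eq_bigr => d _ /=.
by rewrite coefD coefD mulrDr; case: (_ && _); rewrite ?addr0.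
Qed.

Lemma size_proj (P : W) : (size (proj P) <= size P)%N.
Proof.
apply/leq_sizeP => k hk; apply/polyP => j.
by rewrite coef_proj coef0 (nth_default _ hk) coef0 /ev0 rmorph0; case: (_ == _).
Qed.

Lemma size_proj_c (P : W) M a : leq (size (proj P)`_a) M.+1.
Proof.
apply/leq_sizeP => k hk; rewrite coef_proj.
by case: eqP => // e; rewrite e in hk.
Qed.

Lemma proj_mul (P Q : W) : proj (P *w Q) = proj P *w proj Q.
Proof.
have [M hM] := bnd P; have [M' hM'] := bnd Q.
have hPM : forall a, leq (size P`_a) M.+1 := fun a => leq_trans (hM a) (leqnSn M).
have hQM : forall a, leq (size Q`_a) M'.+1 := fun a => leq_trans (hM' a) (leqnSn M').
apply: polyWP => i j.
rewrite coef_proj (coef_wmul _ _ _ _ _ _ _ _ (leqnn (size P)) hPM (leqnn (size Q)) hQM).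
rewrite (coef_wmul _ _ _ _ _ _ _ _ (size_proj P) (size_proj_c P M) (size_proj Q) (size_proj_c Q M')).
case: j => [|j] /=.
  rewrite /ev0 raddf_sum; apply: eq_bigr => a _.
  rewrite raddf_sum; apply: eq_bigr => b _.
  rewrite raddf_sum; apply: eq_bigr => c _.
  rewrite raddf_sum; apply: eq_bigr => d _.
  rewrite -/(ev0 _) !coef_proj.
  case: b => [[|b] hb]; case: d => [[|d] hd] /=;
    rewrite ?addn0 ?addnS ?addSn ?andbF ?shiftT_0 ?mul0r ?mulr0 ?if_same /ev0 ?rmorph0 //.
  by case: (_ == _); rewrite -?/(ev0 _) ?ev0_shift /ev0 ?rmorph0.
symmetry; rewrite big1 // => a _; rewrite big1 // => b _.
rewrite big1 // => c _; rewrite big1 // => d _.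
rewrite !coef_proj.
case: b => [[|b] hb]; case: d => [[|d] hd] /=;
  by rewrite ?addn0 ?addnS ?addSn ?andbF ?shiftT_0 ?mul0r ?mulr0 ?if_same.
Qed.

Lemma wcstE (c : F) : wcst c = wc (c%:P%:P). Proof. by []. Qed.
Lemma wth1E : (wth1 : W) = wc 'X. Proof. by []. Qed.
Lemma wth2E : (wth2 : W) = wc (('X : {poly F})%:P). Proof. by []. Qed.

Lemma proj_wth1 : proj wth1 = wth1.
Proof. by rewrite wth1E proj_wc ev0_X. Qed.
Lemma proj_wcst c : proj (wcst c) = wcst c.
Proof. by rewrite wcstE proj_wc ev0_C. Qed.
Lemma proj_wth2 : proj wth2 = 0.
Proof. by rewrite wth2E proj_wc ev0_th2 /wc !polyC0. Qed.

Lemma proj_wz1 : proj wz1 = wz1.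
Proof.
apply: polyWP => i j; rewrite coef_proj /wz1 !coefX.
case: (i == _) => /=; case: eqP => [->|hj] //=.
- by rewrite coef1 eqxx mulr1n /ev0 rmorph1.
- by rewrite coef1 (introF eqP hj).
- by rewrite coef0 /ev0 rmorph0.
- by rewrite coef0.
Qed.

Lemma proj_wz2 : proj wz2 = 0.
Proof.
apply: polyWP => i j; rewrite coef_proj coef0 /wz2 coefC.
case: (i == _); case: (j == _) => //=.
- by rewrite coefX /= mulr0n !coef0 /ev0 rmorph0.
- by rewrite coef0.
- by rewrite !coef0 /ev0 rmorph0.
- by rewrite coef0.
Qed.
Lemma projE (P : W) : proj P = emb (phi P). Proof. by []. Qed.

End W.

Opaque wmul proj wcst wth1 wth2 wz1 wz2.
Lemma proj_L1 (F : fieldType) n (a0 a1 a2 : F) : @proj F (L1 n a0 a1 a2) = Lred a0 a1 a2.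
Proof.
have eX : proj F (wcst n%:R *w wth1 *w wth2) = 0.
  by rewrite proj_mul proj_wth2 [_ *w 0]wmulr0.
have eY : proj F (wth1 *w wth1) = wth1 *w wth1 by rewrite proj_mul proj_wth1.
have eZ : proj F (wcst a0 *w wz1 *w (wth1 + wcst a1) *w (wth1 + wcst a2)) =
   wcst a0 *w wz1 *w (wth1 + wcst a1) *w (wth1 + wcst a2).
  Time rewrite proj_mul.
  Time rewrite proj_mul.
  Time rewrite proj_mul.
  Time rewrite (projD _ wth1 (wcst a1)).
  Time rewrite (projD _ wth1 (wcst a2)).
  by rewrite !proj_wth1 !proj_wcst proj_wz1.
rewrite /L1 /Lred projB projD projN eX eY eZ; congr (_ - _).
by rewrite oppr0 add0r.
Qed.

Lemma proj_L2 (F : fieldType) n : (1 <= n)%N -> @proj F (L2 F n) = 0.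
Proof.
case: n => // n _.
have e1 : proj F (wexp wth2 n.+1) = 0.
  by rewrite /wexp iterS proj_mul proj_wth2 wmul0.
rewrite /L2 projB e1 proj_mul proj_mul proj_wz2 [_ *w 0]wmulr0 wmul0.
by rewrite subr0.
Qed.


Opaque wmul proj wcst wth1 wth2 wz1 wz2.
Arguments wc {F} r.


Lemma fwd_l (F : fieldType) (A : {poly {poly F}}) (z t B1 B2 : W F) :
  proj F z = 0 -> proj F t = 0 -> proj F (emb A + z *w B1 + t *w B2) = emb A.
Proof.
move=> hz ht; rewrite projD projD proj_emb (proj_mul _ z) (proj_mul _ t) hz ht.
by rewrite !wmul0 !addr0.
Qed.

Lemma fwd_r (F : fieldType) (P1 P2 X Y : W F) :
  proj F Y = 0 -> proj F (P1 *w X + P2 *w Y) = proj F P1 *w proj F X.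
Proof.
by move=> hY; rewrite projD (proj_mul _ P1) (proj_mul _ P2) hY wmulr0 addr0.
Qed.

Lemma back (F : fieldType) (A : {poly {poly F}}) (z t L1' L2' Lr D B P : W F) :
  L1' = Lr + D -> emb A = P *w Lr -> t *w B = P *w D ->
  emb A + z *w 0 + t *w B = P *w L1' + 0 *w L2'.
Proof.
move=> h1 h2 h3; rewrite wmulr0 wmul0 !addr0 h1 wmulDr h2 h3.
by [].
Qed.

Lemma splitL (V : zmodType) (x y z : V) : - x + y - z = (y - z) + - x.
Proof. by rewrite -addrA addrC. Qed.

Lemma wc_mul3 (F : fieldType) (r s t : TP F) : wc r *w wc s *w wc t = wc (r * s * t).
Proof. by rewrite (wc_mul _ r s) wc_mul. Qed.

Lemma wcN (F : fieldType) (r : TP F) : - wc r = wc (- r).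
Proof. by rewrite /wc !polyCN. Qed.

Theorem proposition1 (F : numClosedFieldType) (n : nat) (a0 a1 a2 : F)
  (hn : (1 <= n)%N) (ha0 : a0 != 0) :
  forall A : {poly {poly F}}, in_restr n a0 a1 a2 A <-> in_idealL a0 a1 a2 A.
Proof.
move=> A; split.
  case=> B1 [B2 [P1 [P2 h]]].
  have eA := @fwd_l _ A wz2 wth2 B1 B2 (proj_wz2 F) (proj_wth2 F).
  have eR := @fwd_r _ P1 P2 (L1 n a0 a1 a2) (L2 F n) (proj_L2 F n hn).
  exists (phi F P1).
  by rewrite -eA h eR proj_L1 projE.
case=> Q e.
pose u : TP F := (n%:R : F)%:P%:P * 'X.
exists 0, (emb Q *w wc (- u)), (emb Q), 0.
have hX : @wcst F n%:R *w wth1 *w wth2 = wc (u * ('X : {poly F})%:P).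
  by rewrite wcstE wth1E wth2E wc_mul3.
have hL1 : L1 n a0 a1 a2 = Lred a0 a1 a2 + wc (- (u * ('X : {poly F})%:P)).
  by rewrite -wcN -hX; exact: splitL.
apply: (@back _ A wz2 wth2 _ (L2 F n) _ _ _ _ hL1 e).
apply: polyWP => i j; rewrite wth2E wmul_wc_l !wmul_wc_r coef_emb.
case: eqP => [->|_]; last by rewrite !mul0r mulr0.
have hs : forall c, shiftT (F:=F) c 0%N (('X : {poly F})%:P) = ('X : {poly F})%:P.
  by move=> c; exact: shiftT_th2.
rewrite hs !mulrN; congr (- _).
by rewrite mulrCA [_ * u]mulrC.
Qed.
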